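(* Let $H, N, d_h$ be positive integers and $d = H d_h$. Fix a layer $l$ and, for each head $h \in \{1,\dots,H\}$, let $q_h \in \mathbb{R}^{1\times d_h}$, $K_{l,h} \in \mathbb{R}^{N\times d_h}$ and $V_{l,h}\in\mathbb{R}^{N\times d_h}$. Let $W_l^O \in \mathbb{R}^{d\times d}$. Define the attention weights $A^N_{l,h} = \mathrm{Softmax}\!\left(q_h K_{l,h}^T/\sqrt{d_h}\right)\in\mathbb{R}^{1\times N}$. For each $h$ let $\mathcal{I}_{l,h}\in\{0,1\}^N$ be a mask with $\mathcal{I}_{l,h}[i]=1$ for at least one $i$, and define the masked attention weights $$\hat{A}^N_{l,h} = \frac{A^N_{l,h}\odot \mathcal{I}_{l,h}}{\|A^N_{l,h}\odot \mathcal{I}_{l,h}\|_1},$$ where $\odot$ is the entrywise product. Let $$y^N_l = \mathrm{Cat}_{h\in[H]}\big(A^N_{l,h}V_{l,h}\big)\,W_l^O,\qquad \hat{y}^N_l = \mathrm{Cat}_{h\in[H]}\big(\hat{A}^N_{l,h}V_{l,h}\big)\,W_l^O,$$ where $\mathrm{Cat}$ concatenates the $H$ row vectors of length $d_h$ into a row vector of length $d$. Then $$\|y^N_l-\hat{y}^N_l\|_1 \le 2\hat{C}\sum_{h\in[H]}\sum_{i\in[N]} A^N_{l,h}[i]\,\bar{V}_{l,h}\,\big(1-\mathcal{I}_{l,h}[i]\big),$$ where $\hat{C} = \|(W_l^O)^T\|_1$ is the induced matrix $1$-norm of $(W_l^O)^T$ (the largest absolute column sum of $(W_l^O)^T$),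 and $\bar{V}_{l,h} = \max_{k\in[N]}\|V_{l,h}[k]\|_1$, with $V_{l,h}[k]$ the $k$-th row of $V_{l,h}$.
   Context: This models the attention output of one Transformer layer at decoding step $N$ with $H$ heads, before and after evicting key–value cache entries: $\mathcal{I}_{l,h}[i]=1$ means the $i$-th cached key/value of head $h$ is retained and $0$ means it is evicted; evicting entries is equivalent to setting the corresponding pre-softmax logits to $-\infty$, which yields the renormalized weights $\hat{A}^N_{l,h}$. Vector norms $\|\cdot\|_1$ are the usual $\ell_1$ norms; $[N]=\{1,\dots,N\}$. *)

(* Defs.v *)
From HB Require Import structures.
From mathcomp Require Import all_boot all_order all_algebra.
From mathcomp Require Import all_classical all_reals.
From mathcomp Require Import sequences exp.
Set Implicit Arguments. Unset Strict Implicit. Unset Printing Implicit Defensive.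
Import Order.TTheory GRing.Theory Num.Theory.
Local Open Scope ring_scope.

Section Attn.
Variable R : realType.

Definition l1norm n (v : 'rV[R]_n) : R := \sum_(j < n) `|v 0 j|.

Definition mx_norm1 m n (M : 'M[R]_(m, n)) : R :=
  \big[Num.max/0]_(j < n) \sum_(i < m) `|M i j|.

Definition softmax n (x : 'rV[R]_n) : 'rV[R]_n :=
  \row_(i < n) (expR (x 0 i) / \sum_(k < n) expR (x 0 k)).

Definition attn_weights dh N (q : 'rV[R]_dh) (K : 'M[R]_(N, dh)) : 'rV[R]_N :=
  softmax ((Num.sqrt (dh%:R))^-1 *: (q *m K^T)).

Definition ind (b : bool) : R := if b then 1 else 0.

Definition masked_weights N (A : 'rV[R]_N) (I : 'I_N -> bool) : 'rV[R]_N :=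
  let AI := \row_(i < N) (A 0 i * ind (I i)) in
  (l1norm AI)^-1 *: AI.

(* concatenation of H row vectors of length dh into a row of length H*dh
   (block h occupies positions h*dh .. h*dh+dh-1) *)
Definition cat_heads H dh (f : 'I_H -> 'rV[R]_dh) : 'rV[R]_(H * dh) :=
  mxvec (\matrix_(h < H, j < dh) f h 0 j).

Definition Vbar N dh (V : 'M[R]_(N, dh)) : R :=
  \big[Num.max/0]_(k < N) l1norm (row k V).

End Attn.

(* Main.v *)
Require Import Defs.
From HB Require Import structures.
From mathcomp Require Import all_boot all_order all_algebra.
From mathcomp Require Import all_classical all_reals.
From mathcomp Require Import sequences exp.
Import Order.TTheory GRing.Theory Num.Theory.
Local Open Scope ring_scope.

Section H.
Variable R : realType.

Lemma bigmax_geX (I : eqType) (r : seq I) (F : I -> R) x :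
  x \in r -> F x <= \big[Num.max/0]_(i <- r) F i.
Proof.
elim: r => // a r IH; rewrite inE big_cons => /orP [/eqP->|/IH h].
  by rewrite le_max lexx.
by rewrite le_max h orbT.
Qed.

Lemma bigmax_ge0X (I : eqType) (r : seq I) (F : I -> R) :
  0 <= \big[Num.max/0]_(i <- r) F i.
Proof.
elim: r => [|a r IH]; first by rewrite big_nil.
by rewrite big_cons le_max IH orbT.
Qed.

Lemma l1_ge0 n (v : 'rV[R]_n) : 0 <= l1norm v.
Proof. by apply: sumr_ge0 => i _; exact: normr_ge0. Qed.

Lemma l1_mulmx m n (x : 'rV[R]_m) (W : 'M[R]_(m,n)) :
  l1norm (x *m W) <= mx_norm1 W^T * l1norm x.
Proof.
rewrite /l1norm.
apply: (le_trans (y := \sum_(j < n) \sum_(i < m) `|x 0 i| * `|W i j|)).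
  apply: ler_sum => j _; rewrite mxE.
  apply: (le_trans (ler_norm_sum _ _ _)).
  by apply: ler_sum => i _; rewrite normrM.
rewrite exchange_big mulr_sumr; apply: ler_sum => i _.
rewrite -mulr_sumr mulrC; apply: ler_wpM2r; first exact: normr_ge0.
rewrite /mx_norm1.
have -> : \sum_(j < n) `|W i j| = \sum_(j < n) `|W^T j i|.
  by apply: eq_bigr => j _; rewrite mxE.
have := @bigmax_geX _ (index_enum (ordinal m)) (fun i => \sum_(j < n) `|W^T j i|) i (mem_index_enum _). by [].
Qed.

Lemma l1_mulV N dh (x : 'rV[R]_N) (V : 'M[R]_(N,dh)) :
  l1norm (x *m V) <= l1norm x * Vbar V.
Proof.
rewrite /l1norm.
apply: (le_trans (y := \sum_(j < dh) \sum_(i < N) `|x 0 i| * `|V i j|)).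
  apply: ler_sum => j _; rewrite mxE.
  apply: (le_trans (ler_norm_sum _ _ _)).
  by apply: ler_sum => i _; rewrite normrM.
rewrite exchange_big mulr_suml; apply: ler_sum => i _.
rewrite -mulr_sumr; apply: ler_wpM2l; first exact: normr_ge0.
have -> : \sum_(j < dh) `|V i j| = l1norm (row i V).
  by apply: eq_bigr => j _; rewrite mxE.
have := @bigmax_geX _ (index_enum (ordinal N)) (fun k => l1norm (row k V)) i (mem_index_enum _). by [].
Qed.

Lemma l1_cat H dh (f : 'I_H -> 'rV[R]_dh) :
  l1norm (cat_heads f) = \sum_h l1norm (f h).
Proof.
rewrite /l1norm /cat_heads (reindex _ (curry_mxvec_bij _ _)) /=.
rewrite pair_bigA /=; apply: eq_bigr => [[i j]] _ /=.
by rewrite mxvecE mxE.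
Qed.

Lemma softmax_pos n (x : 'rV[R]_n) i : 0 < softmax x 0 i.
Proof.
rewrite mxE; apply: divr_gt0; first exact: expR_gt0.
rewrite (bigD1 i) //=; apply: ltr_pwDl; first exact: expR_gt0.
by apply: sumr_ge0 => k _; apply: ltW; exact: expR_gt0.
Qed.

Lemma softmax_sum n (x : 'rV[R]_n) (i0 : 'I_n) : \sum_i softmax x 0 i = 1.
Proof.
under eq_bigr do rewrite mxE.
rewrite -mulr_suml divff //; apply: lt0r_neq0.
rewrite (bigD1 i0) //=; apply: ltr_pwDl; first exact: expR_gt0.
by apply: sumr_ge0 => k _; apply: ltW; exact: expR_gt0.
Qed.

Lemma weights_diff N (A : 'rV[R]_N) (I : 'I_N -> bool) :
  (forall i, 0 < A 0 i) -> \sum_i A 0 i = 1 -> (exists i, I i) ->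
  l1norm (A - masked_weights A I) = 2 * \sum_i A 0 i * (1 - ind R (I i)).
Proof.
move=> Apos Asum [i0 Hi0].
set S := \sum_i A 0 i * ind R (I i).
have indge0 : forall i, 0 <= ind R (I i) by move=> i; rewrite /ind; case: (I i).
have hS : l1norm (\row_(i < N) (A 0 i * ind R (I i))) = S.
  apply: eq_bigr => i _; rewrite mxE ger0_norm //.
  by apply: mulr_ge0; [exact: ltW | exact: indge0].
have Spos : 0 < S.
  rewrite /S (bigD1 i0) //= /ind Hi0 mulr1; apply: ltr_pwDl => //.
  by apply: sumr_ge0 => i _; apply: mulr_ge0; [exact: ltW | exact: indge0].
have hS1 : \sum_i A 0 i * (1 - ind R (I i)) = 1 - S.
  rewrite -[X in X - S]Asum /S -sumrB; apply: eq_bigr => i _; by rewrite mulrBr mulr1.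
have Sle1 : S <= 1.
  have : 0 <= \sum_i A 0 i * (1 - ind R (I i)).
    apply: sumr_ge0 => i _; apply: mulr_ge0; first exact: ltW.
    by rewrite /ind; case: (I i); rewrite ?subrr ?subr0.
  by rewrite hS1 subr_ge0.
have Sinv : 1 <= S^-1 by rewrite invf_ge1.
rewrite /l1norm /masked_weights hS.
transitivity (\sum_i (A 0 i * (1 - ind R (I i)) + A 0 i * ind R (I i) * (S^-1 - 1))).
  apply: eq_bigr => i _; rewrite !mxE /ind; case: (I i).
    rewrite !mulr1 subrr mulr0 add0r [S^-1 * _]mulrC -{1}(mulr1 (A 0 i)) -mulrBr.
    rewrite normrM (ger0_norm (ltW (Apos i))) ler0_norm ?opprB //.
    by rewrite subr_le0.
  by rewrite !mulr0 !subr0 mul0r mulr1 addr0 ger0_norm // ltW.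
rewrite big_split /= hS1 -mulr_suml -/S mulrBr mulr1 divff ?lt0r_neq0 //.
by rewrite -mulr2n mulr_natl.
Qed.

End H.

Theorem theorem1 (R : realType) (H N dh : nat)
  (HH : (0 < H)%N) (HN : (0 < N)%N) (Hdh : (0 < dh)%N)
  (q : 'I_H -> 'rV[R]_dh) (K V : 'I_H -> 'M[R]_(N, dh))
  (WO : 'M[R]_(H * dh, H * dh)) (I : 'I_H -> 'I_N -> bool)
  (HI : forall h, exists i, I h i) :
  let A := fun h => attn_weights (q h) (K h) in
  let Ahat := fun h => masked_weights (A h) (I h) in
  let y := cat_heads (fun h => A h *m V h) *m WO in
  let yhat := cat_heads (fun h => Ahat h *m V h) *m WO in
  l1norm (y - yhat) <=
    2 * mx_norm1 WO^T *
    \sum_(h < H) \sum_(i < N) A h 0 i * Vbar (V h) * (1 - ind R (I h i)).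
Proof.
cbv zeta.
rewrite -mulmxBl /cat_heads -linearB /=.
set A := fun h => attn_weights (q h) (K h).
rewrite (_ : \matrix_(h < H, j < dh) _ - _ =
   \matrix_(h < H, j < dh) (((A h - masked_weights (A h) (I h)) *m V h) 0 j)); last first.
  apply/matrixP => i j; rewrite mxE [in RHS]mxE !mxE -sumrB; apply: eq_bigr => k _; rewrite -mulrBl; congr (_ * _); by rewrite !mxE.
rewrite -/(cat_heads (fun h => (A h - masked_weights (A h) (I h)) *m V h)).
apply: le_trans; first exact: l1_mulmx.
have C0 : 0 <= mx_norm1 WO^T by apply: bigmax_ge0X.
rewrite [2 * _]mulrC -mulrA; apply: ler_wpM2l => //; rewrite l1_cat mulr_sumr; apply: ler_sum => h _.
apply: le_trans; first exact: l1_mulV.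
case: (HI h) => i0 _.
rewrite weights_diff //; last first.
- by rewrite /A /attn_weights (softmax_sum R _ _ i0).
- by move=> i; rewrite /A /attn_weights softmax_pos.
rewrite -mulrA; apply: ler_wpM2l => //.
rewrite mulr_suml; apply: ler_sum => i _; rewrite /A [X in X <= _]mulrAC; exact: lexx.
Qed.
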